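(* Let $\mathcal{C}$ be a category, $\rho$ a canonical PBPO rule with components $l : K \to L$, $r : K \to R$, $t_L : L \to L'$, $t_K : K \to K'$, $t_R : R \to R'$, $l' : K' \to L'$, $r' : K' \to R'$. Let $G_L$ be an object and let $m' \circ e : L \to G_L$ be a morphism with $m' : L_c \rightarrowtail G_L$ a monomorphism and $e : L \twoheadrightarrow L_c$ an epimorphism, and assume $t_L = t_{L_c} \circ e$ for some (necessarily unique) $t_{L_c} : L_c \to L'$ and that the compacted rule $\rho_e$ exists. Then for all $\alpha : G_L \to L'$ and all objects $G_R$: $G_L \Rightarrow_\rho^{(m' \circ e),\alpha} G_R$ if and only if $G_L \Rightarrow_{\rho_e}^{m',\alpha} G_R$.
   Context: A PBPO rule consists of objects $L,K,R,L',K',R'$ and morphisms $l : K \to L$, $r : K \to R$, $t_L : L \to L'$, $t_K : K \to K'$, $t_R : R \to R'$, $l' : K' \to L'$, $r' : K' \to R'$ with $t_L \circ l = l' \circ t_K$ and $t_R \circ r = r' \circ t_K$. It is canonical if $L \xleftarrow{l} K \xrightarrow{t_K} K'$ is a pullback of $t_L, l'$ and $K' \xrightarrow{r'} R' \xleftarrow{t_R} R$ is a pushout of $t_K, r$. A PBPO rewrite step $G_L \Rightarrow_\rho^{m,\alpha} G_R$ is given by morphisms $m : L \to G_L$, $\alpha : G_L \to L'$ with $t_L = \alpha \circ m$; a pullback $G_L \xleftarrow{g_L} G_K \xrightarrow{u'} K'$ of $\alpha$ and $l'$; the unique $u : K \to G_K$ with $g_L \circ u = m \circ l$ and $u' \circ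 u = t_K$; a pushout $G_K \xrightarrow{g_R} G_R \xleftarrow{w} R$ of $u$ and $r$; and the unique $w' : G_R \to R'$ with $w' \circ g_R = r' \circ u'$ and $w' \circ w = t_R$. Compacted rule: for a canonical PBPO rule $\rho$ and a factorization $t_L = t_{L_c} \circ e$ with $e : L \to L_c$ epi, let $L_c \xleftarrow{k} K_c \xrightarrow{t_{K_c}} K'$ be a pullback of $t_{L_c}$ and $l'$; let $e_K : K \to K_c$ be the unique morphism with $k \circ e_K = e \circ l$ and $t_{K_c} \circ e_K = t_K$; let $K_c \xrightarrow{r_c} R_c \xleftarrow{e_R} R$ be a pushout of $e_K$ and $r$; and let $t_{R_c} : R_c \to R'$ be the unique morphism with $t_{R_c} \circ r_c = r' \circ t_{K_c}$ and $t_{R_c} \circ e_R = t_R$. The compacted rule $\rho_e$ is the (canonical) PBPO rule with $L_c \xleftarrow{k} K_c \xrightarrow{r_c} R_c$, $L' \xleftarrow{l'} K' \xrightarrow{r'} R'$ and typings $t_{L_c}, t_{K_c}, t_{R_c}$. *)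

(* Defs.v *)
Record Category := {
  Ob :> Type;
  Hom : Ob -> Ob -> Type;
  comp : forall A B C : Ob, Hom B C -> Hom A B -> Hom A C;
  idm : forall A : Ob, Hom A A;
  comp_assoc : forall (A B C D : Ob) (h : Hom C D) (g : Hom B C) (f : Hom A B),
      comp A C D h (comp A B C g f) = comp A B D (comp B C D h g) f;
  comp_id_left : forall (A B : Ob) (f : Hom A B), comp A B B (idm B) f = f;
  comp_id_right : forall (A B : Ob) (f : Hom A B), comp A A B f (idm A) = f
}.

Arguments Hom {c} _ _.
Arguments comp {c A B C} _ _.
Arguments idm {c} _.

Notation "g \oc f" := (comp g f) (at level 40, left associativity).

Section CatNotions.
Context {C : Category}.

Definition IsMono {A B : C} (f : Hom A B) : Prop :=
  forall (X : C) (g h : Hom X A), f \oc g = f \oc h -> g = h.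

Definition IsEpi {A B : C} (f : Hom A B) : Prop :=
  forall (X : C) (g h : Hom B X), g \oc f = h \oc f -> g = h.

Definition IsPullback {A B Z P : C} (f : Hom A Z) (g : Hom B Z)
  (p1 : Hom P A) (p2 : Hom P B) : Prop :=
  f \oc p1 = g \oc p2 /\
  forall (Q : C) (q1 : Hom Q A) (q2 : Hom Q B), f \oc q1 = g \oc q2 ->
    exists u : Hom Q P, (p1 \oc u = q1 /\ p2 \oc u = q2) /\
      forall u' : Hom Q P, p1 \oc u' = q1 -> p2 \oc u' = q2 -> u' = u.

Definition IsPushout {A B Z P : C} (f : Hom Z A) (g : Hom Z B)
  (q1 : Hom A P) (q2 : Hom B P) : Prop :=
  q1 \oc f = q2 \oc g /\
  forall (Q : C) (h1 : Hom A Q) (h2 : Hom B Q), h1 \oc f = h2 \oc g ->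
    exists u : Hom P Q, (u \oc q1 = h1 /\ u \oc q2 = h2) /\
      forall u' : Hom P Q, u' \oc q1 = h1 -> u' \oc q2 = h2 -> u' = u.

Definition pbpo_step {L K R L' K' R' : C}
  (l : Hom K L) (r : Hom K R)
  (tL : Hom L L') (tK : Hom K K') (tR : Hom R R')
  (l' : Hom K' L') (r' : Hom K' R')
  (GL GR : C) (m : Hom L GL) (alpha : Hom GL L') : Prop :=
  tL = alpha \oc m /\
  exists (GK : C) (gL : Hom GK GL) (u' : Hom GK K'),
    IsPullback alpha l' gL u' /\
    exists u : Hom K GK,
      gL \oc u = m \oc l /\ u' \oc u = tK /\
      exists (gR : Hom GK GR) (w : Hom R GR),
        IsPushout u r gR w /\
        exists w' : Hom GR R', w' \oc gR = r' \oc u' /\ w' \oc w = tR.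

End CatNotions.

Record PBPORule (C : Category) := {
  rL : C; rK : C; rR : C; rL' : C; rK' : C; rR' : C;
  rl : Hom rK rL; rr : Hom rK rR;
  rtL : Hom rL rL'; rtK : Hom rK rK'; rtR : Hom rR rR';
  rl' : Hom rK' rL'; rr' : Hom rK' rR';
  rcomm_L : rtL \oc rl = rl' \oc rtK;
  rcomm_R : rtR \oc rr = rr' \oc rtK
}.

Arguments rL {C}. Arguments rK {C}. Arguments rR {C}.
Arguments rL' {C}. Arguments rK' {C}. Arguments rR' {C}.
Arguments rl {C}. Arguments rr {C}. Arguments rtL {C}. Arguments rtK {C}.
Arguments rtR {C}. Arguments rl' {C}. Arguments rr' {C}.

Definition canonical {C : Category} (rho : PBPORule C) : Prop :=
  IsPullback (rtL rho) (rl' rho) (rl rho) (rtK rho) /\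
  IsPushout (rtK rho) (rr rho) (rr' rho) (rtR rho).

Definition step {C : Category} (rho : PBPORule C) (GL GR : C)
  (m : Hom (rL rho) GL) (alpha : Hom GL (rL' rho)) : Prop :=
  pbpo_step (rl rho) (rr rho) (rtL rho) (rtK rho) (rtR rho) (rl' rho) (rr' rho)
    GL GR m alpha.

(* The data (K_c, k, t_Kc, e_K, R_c, r_c, e_R, t_Rc) constitute the compacted
   rule rho_e for the factorization t_L = t_Lc o e, exactly as in the paper. *)
Definition is_compaction {C : Category} (rho : PBPORule C)
  {Lc : C} (e : Hom (rL rho) Lc) (tLc : Hom Lc (rL' rho))
  {Kc Rc : C} (k : Hom Kc Lc) (tKc : Hom Kc (rK' rho)) (eK : Hom (rK rho) Kc)
  (rc : Hom Kc Rc) (eR : Hom (rR rho) Rc) (tRc : Hom Rc (rR' rho)) : Prop :=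
  IsPullback tLc (rl' rho) k tKc /\
  k \oc eK = e \oc rl rho /\ tKc \oc eK = rtK rho /\
  IsPushout eK (rr rho) rc eR /\
  tRc \oc rc = rr' rho \oc tKc /\ tRc \oc eR = rtR rho.

(* Main.v *)
Require Import Defs.

Ltac na := repeat rewrite comp_assoc.

Theorem lemma4 (C : Category) (rho : PBPORule C) (Hcan : canonical rho)
  (GL Lc : C) (m' : Hom Lc GL) (e : Hom (rL rho) Lc)
  (Hm' : IsMono m') (He : IsEpi e)
  (tLc : Hom Lc (rL' rho)) (HtLc : rtL rho = tLc \oc e)
  (Kc Rc : C) (k : Hom Kc Lc) (tKc : Hom Kc (rK' rho)) (eK : Hom (rK rho) Kc)
  (rc : Hom Kc Rc) (eR : Hom (rR rho) Rc) (tRc : Hom Rc (rR' rho))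
  (Hcomp : is_compaction rho e tLc k tKc eK rc eR tRc) :
  forall (alpha : Hom GL (rL' rho)) (GR : C),
    step rho GL GR (m' \oc e) alpha <->
    pbpo_step k rc tLc tKc tRc (rl' rho) (rr' rho) GL GR m' alpha.
Proof.
  destruct Hcomp as [[HKc1 HKc2] [HkeK [HtKeK [[HRc1 HRc2] [HtRc1 HtRc2]]]]].
  pose proof (@rcomm_R C rho) as HcR.
  intros alpha GR; split.
  - intros [HtL [GK [gL [u' [[HP1 HP2] [u [Hu1 [Hu2 [gR [w [[HQ1 HQ2] [w' [Hw1 Hw2]]]]]]]]]]]]].
    unfold step in *.
    assert (HtLc' : tLc = alpha \oc m').
    { apply He. rewrite <- HtLc, HtL. now rewrite comp_assoc. }
    split; [exact HtLc'|].
    exists GK, gL, u'. split; [split; assumption|].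
    destruct (HP2 _ (m' \oc k) tKc) as [uc [[Huc1 Huc2] _]].
    { rewrite HtLc' in HKc1. rewrite <- comp_assoc in HKc1. exact HKc1. }
    exists uc. split; [exact Huc1|]. split; [exact Huc2|].
    assert (HucK : uc \oc eK = u).
    { destruct (HP2 _ (gL \oc u) (u' \oc u)) as [z [_ Hz]].
      { rewrite comp_assoc, HP1. now rewrite comp_assoc. }
      rewrite (Hz u eq_refl eq_refl). apply Hz.
      - rewrite comp_assoc, Huc1, <- comp_assoc, HkeK, comp_assoc. now rewrite Hu1.
      - rewrite comp_assoc, Huc2, HtKeK. now rewrite Hu2. }
    destruct (HRc2 _ (gR \oc uc) w) as [wc [[Hwc1 Hwc2] Hwcu]].
    { rewrite <- comp_assoc, HucK. exact HQ1. }
    exists gR, wc. split.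
    + split; [symmetry; exact Hwc1|].
      intros Q h1 h2 Hh.
      destruct (HQ2 Q h1 (h2 \oc eR)) as [v [[Hv1 Hv2] Hvu]].
      { rewrite <- HucK, comp_assoc, Hh, <- comp_assoc, HRc1. now rewrite comp_assoc. }
      exists v. split.
      * split; [exact Hv1|].
        destruct (HRc2 Q (h1 \oc uc) (h2 \oc eR)) as [z [_ Hz]].
        { rewrite <- comp_assoc, HucK, <- Hv1, <- Hv2, <- comp_assoc, HQ1. now rewrite comp_assoc. }
        rewrite (Hz h2).
        -- apply Hz.
           ++ rewrite <- comp_assoc, Hwc1, comp_assoc, Hv1. reflexivity.
           ++ rewrite <- comp_assoc, Hwc2. exact Hv2.
        -- symmetry; exact Hh.
        -- reflexivity.
      * intros v' Hv'1 Hv'2. apply Hvu; [exact Hv'1|].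
        rewrite <- Hwc2, comp_assoc, Hv'2. reflexivity.
    + exists w'. split; [exact Hw1|].
      destruct (HRc2 _ (rr' rho \oc tKc) (rtR rho)) as [z [_ Hz]].
      { rewrite <- comp_assoc, HtKeK. symmetry. exact HcR. }
      rewrite (Hz tRc HtRc1 HtRc2). apply Hz.
      * rewrite <- comp_assoc, Hwc1, comp_assoc, Hw1, <- comp_assoc, Huc2. reflexivity.
      * rewrite <- comp_assoc, Hwc2. exact Hw2.
  - intros [HtLc' [GK [gL [u' [[HP1 HP2] [uc [Huc1 [Huc2 [gR [wc [[HQ1 HQ2] [w' [Hw1 Hw2]]]]]]]]]]]]].
    unfold step, pbpo_step.
    split.
    { rewrite HtLc, HtLc'. now rewrite comp_assoc. }
    exists GK, gL, u'. split; [split; assumption|].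
    exists (uc \oc eK). split.
    { rewrite comp_assoc, Huc1, <- comp_assoc, HkeK. now rewrite comp_assoc. }
    split.
    { rewrite comp_assoc, Huc2. exact HtKeK. }
    exists gR, (wc \oc eR). split.
    + split.
      { rewrite comp_assoc, HQ1, <- comp_assoc, HRc1. now rewrite comp_assoc. }
      intros Q h1 h2 Hh.
      destruct (HRc2 Q (h1 \oc uc) h2) as [z [[Hz1 Hz2] Hzu]].
      { rewrite <- comp_assoc. exact Hh. }
      destruct (HQ2 Q h1 z) as [v [[Hv1 Hv2] Hvu]].
      { symmetry; exact Hz1. }
      exists v. split.
      * split; [exact Hv1|]. rewrite comp_assoc, Hv2. exact Hz2.
      * intros v' Hv'1 Hv'2. apply Hvu; [exact Hv'1|].
        apply Hzu.
        -- rewrite <- comp_assoc, <- HQ1, comp_assoc, Hv'1. reflexivity.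
        -- rewrite <- comp_assoc. exact Hv'2.
    + exists w'. split; [exact Hw1|].
      rewrite comp_assoc, Hw2. exact HtRc2.
Qed.
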